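(* Let $X$ be a locally compact space and $\kappa$ an infinite cardinal. Then $\mathcal{K}(X)$ has calibre $(\kappa^+,\omega)$ if and only if $e(\mathcal{K}(X))\le\kappa$.
   Context: All spaces are Tychonoff. $\mathcal{K}(X)$ is the set of compact subsets of $X$ ordered by inclusion and equipped with the Vietoris topology. A directed set $P$ has calibre $(\mu,\lambda)$ if every subset of $P$ of size $\mu$ contains a subset of size $\lambda$ with an upper bound in $P$. The extent $e(Y)$ is the supremum of cardinalities of closed discrete subsets of $Y$. *)

(* Defs.v *)
From HB Require Import structures.
From mathcomp Require Import all_boot all_order.
From mathcomp Require Import all_classical all_reals all_analysis.
Set Implicit Arguments. Unset Strict Implicit. Unset Printing Implicit Defensive.
Local Open Scope classical_set_scope.

Definition hyperK (X : topologicalType) : Type := {K : set X | compact K}.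

HB.instance Definition _ (X : topologicalType) := gen_eqMixin (hyperK X).
HB.instance Definition _ (X : topologicalType) := gen_choiceMixin (hyperK X).

(* Index of the Vietoris subbase: (false, U) ~ {K | K ⊆ U},
   (true, U) ~ {K | K ∩ U ≠ ∅}, for U open in X. *)
Definition vietoris_index (X : topologicalType) : Type := (bool * set X)%type.
HB.instance Definition _ (X : topologicalType) :=
  isPointed.Build (vietoris_index X) (false, setT).

Definition vietoris_dom (X : topologicalType) : set (vietoris_index X) :=
  [set i | open i.2].

Definition vietoris_sub (X : topologicalType) (i : vietoris_index X)
  : set (hyperK X) :=
  if i.1 then [set K | proj1_sig K `&` i.2 !=set0]
  else [set K | proj1_sig K `<=` i.2].

HB.instance Definition _ (X : topologicalType) :=
  @isSubBaseTopological.Build (hyperK X) (vietoris_index X)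
    (@vietoris_dom X) (@vietoris_sub X).

Definition hyperK_le (X : topologicalType) (A B : hyperK X) : Prop :=
  proj1_sig A `<=` proj1_sig B.

(* Calibre (mu, lambda) of a (directed) set T with order le, where the
   cardinalities mu and lambda are given as predicates "S has size mu". *)
Definition calibre (T : Type) (le : T -> T -> Prop)
  (size_mu size_lambda : set T -> Prop) : Prop :=
  forall S : set T, size_mu S ->
    exists S' : set T, [/\ S' `<=` S, size_lambda S' &
      exists u : T, forall x, S' x -> le x u].

(* |S| = kappa^+, where kappa = |[set: K]| : S has size > kappa and every
   subset of S of size > kappa is equinumerous with S. *)
Definition has_size_succ (K : Type) (T : Type) (S : set T) : Prop :=
  ~ (S #<= [set: K])%card /\
  forall B : set T, B `<=` S -> ~ (B #<= [set: K])%card -> (B #= S)%card.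

Definition has_size_omega (T : Type) (S : set T) : Prop :=
  (S #= [set: nat])%card.

Definition closed_discrete (Y : topologicalType) (D : set Y) : Prop :=
  closed D /\
  forall y, D y -> exists U : set Y, [/\ open U, U y & U `&` D = [set y]].

Definition extent_le (Y : topologicalType) (K : Type) : Prop :=
  forall D : set Y, closed_discrete D -> (D #<= [set: K])%card.

(* Main.v *)
From HB Require Import structures.
Require Import Defs.
From mathcomp Require Import all_boot all_order.
From mathcomp Require Import all_classical all_reals all_analysis.
From mathcomp Require Import finmap wochoice.
Local Open Scope classical_set_scope.
Set Implicit Arguments. Unset Strict Implicit. Unset Printing Implicit Defensive.

Lemma wo_min (T : eqType) (R : rel T) : well_order R ->
  forall P : set T, P !=set0 -> exists2 z, P z & forall x, P x -> R z x.
Proof.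
move=> wo P [x Px].
have [|z [[zP zlb] _]] := wo [pred y | `[< P y >]].
  by exists x; rewrite inE; apply/asboolP.
exists z; first by move: zP; rewrite inE => /asboolP.
by move=> y Py; apply: zlb; rewrite inE; apply/asboolP.
Qed.

Lemma wo_facts (T : eqType) (R : rel T) : well_order R ->
  [/\ (forall x, R x x), (forall x y, R x y -> R y x -> x = y)
    & (forall x y, R x y \/ R y x)].
Proof.
move=> wo.
have refl : forall x, R x x.
  move=> x; have [z Pz /(_ x erefl)] := wo_min wo (P := [set x]) (ex_intro _ x erefl).
  by move: Pz => /= ->.
split => //.
  move=> x y Rxy Ryx.
  have [|z [[zA zlb] zu]] := wo (mem [:: x; y]).
    by exists x; rewrite inE eqxx.
  have hx : z = x.
    apply: zu; split; first by rewrite inE eqxx.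
    by move=> w; rewrite !inE => /orP[/eqP->|/eqP->].
  have hy : z = y.
    apply: zu; split; first by rewrite !inE eqxx orbT.
    by move=> w; rewrite !inE => /orP[/eqP->|/eqP->].
  by rewrite -hx -hy.
move=> x y.
have [z Pz zlb] := wo_min wo (P := [set w | w = x \/ w = y]) (ex_intro _ x (or_introl erefl)).
case: Pz => <-; [left; apply: zlb; right | right; apply: zlb; left]; done.
Qed.

Definition ltR (T : eqType) (R : rel T) x y := R x y /\ x <> y.

Lemma wo_wf (T : eqType) (R : rel T) : well_order R -> well_founded (ltR R).
Proof.
move=> wo; have [refl anti tot] := wo_facts wo.
move=> x; apply: contrapT => nAx.
have [z nAz zlb] := wo_min wo (P := [set w | ~ Acc (ltR R) w]) (ex_intro _ x nAx).
apply: nAz; constructor => y [Ryz yz]; apply: contrapT => nAy.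
by apply: yz; apply: anti => //; apply: zlb.
Qed.


Lemma key_inj (T : choiceType) (Kp : Type) (R : rel T) (wo : well_order R)
  (B B' : set T) :
  (forall b, B b -> ([set c | B c /\ ltR R c b] #<= [set: Kp])%card) ->
  B' `<=` B -> ~ (B' #<= [set: Kp])%card -> (B #<= B')%card.
Proof.
move=> segle B'B nB'.
have [refl anti tot] := wo_facts wo.
pose F (b : T) (rec : forall c, ltR R c b -> T) : T :=
  xget b (fun y => B' y /\ ~ exists c (h : ltR R c b), B c /\ rec c h = y).
pose f := Fix (wo_wf wo) (fun _ => T) F.
have fE : forall b, f b = xget b (fun y => B' y /\ ~ exists c (h : ltR R c b), B c /\ f c = y).
  move=> b; rewrite /f Fix_eq //.
  move=> x g1 g2 e.
  have -> : g1 = g2 by apply: functional_extensionality_dep => y;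
    apply: functional_extensionality_dep => p; exact: e.
  by [].
have fP : forall b, B b -> B' (f b) /\ ~ exists c, [/\ B c, ltR R c b & f c = f b].
  move=> b Bb.
  pose P := fun y => B' y /\ ~ exists c (h : ltR R c b), B c /\ f c = y.
  have e : f b = xget b P := fE b.
  have : P (xget b P).
    apply: xgetPex; apply: contrapT => nex; apply: nB'.
    apply: card_le_trans (segle b Bb).
    apply: (card_le_trans _ (card_image_le f _)).
    apply: subset_card_le => y B'y.
    apply: contrapT => nim; apply: nex; exists y; split => // -[c [h [Bc fcy]]].
    by apply: nim; exists c.
  rewrite -e => -[B'fb nex]; split => //.
  move=> [c [Bc h fcb]]; apply: nex; exists c, h; split => //.
have h : $|{injfun B >-> B'}|.
  apply/injfunPex; exists f; first by move=> b /fP[].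
  move=> b1 b2; rewrite !in_setE => Bb1 Bb2 e.
  apply: contrapT => neq.
  have [R12|R21] := tot b1 b2.
  - by have [_ []] := fP b2 Bb2; exists b1; split.
  - have [_ []] := fP b1 Bb1; exists b2; split => //.
    by split => // /esym.
case: h => g; exact: inj_card_le g.
Qed.

Lemma succ_sub (T : choiceType) (Kp : Type) (D : set T) :
  ~ (D #<= [set: Kp])%card -> exists B, B `<=` D /\ has_size_succ Kp B.
Proof.
move=> nD.
have [R wo] := well_ordering_principle T.
have [refl anti tot] := wo_facts wo.
pose seg d := [set c | D c /\ ltR R c d].
suff [B [BD nB segB]] : exists B, [/\ B `<=` D, ~ (B #<= [set: Kp])%card &
   forall b, B b -> ([set c | B c /\ ltR R c b] #<= [set: Kp])%card].
  exists B; split => //; split => // B' B'B nB'.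
  apply: Cantor_Bernstein; first exact: subset_card_le.
  exact: (key_inj wo segB B'B nB').
have [[d0 [Dd0 nd0]]|nP] := pselect (exists d, D d /\ ~ (seg d #<= [set: Kp])%card).
  have [z [Dz nz] zlb] := wo_min wo (ex_intro (fun d => D d /\ ~ (seg d #<= [set: Kp])%card) d0 (conj Dd0 nd0)).
  exists (seg z); split => //; first by move=> c [].
  move=> b [Db [Rbz bz]].
  apply: (card_le_trans _ (_ : (seg b #<= [set: Kp])%card)).
    by apply: subset_card_le => c [[Dc _] h].
  apply: contrapT => nb; apply: bz; apply: anti => //; apply: zlb; split => //.
exists D; split => // b Db.
apply: (card_le_trans _ (_ : (seg b #<= [set: Kp])%card)).
  by apply: subset_card_le => c [Dc h].
by apply: contrapT => nb; apply: nP; exists b.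
Qed.


Lemma H_sub_open (X : topologicalType) (i : vietoris_index X) :
  open i.2 -> open (vietoris_sub i).
Proof.
move=> oi.
rewrite /open /= /topology_structure.Builders_14.open_from /=.
exists [set vietoris_sub i].
  by move=> _ ->; apply: finI_from1.
by rewrite bigcup_set1.
Qed.

Lemma H_open_base (X : topologicalType) (N : set (hyperK X)) (K : hyperK X) :
  open N -> N K -> exists F : {fset vietoris_index X},
   [/\ (forall i, i \in F -> open i.2), (forall i, i \in F -> vietoris_sub i K)
     & (forall L, (forall i, i \in F -> vietoris_sub i L) -> N L)].
Proof.
rewrite /open /= /topology_structure.Builders_14.open_from /=.
move=> [S SF <-] [B SB BK].
have [F FD FB] := SF B SB.
exists F; split.
- by move=> i /FD; rewrite in_setE.
- by move=> i iF; move: BK; rewrite -FB; apply.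
- by move=> L hL; exists B => //; rewrite -FB => i; apply: hL.
Qed.

Lemma H_acc (X : topologicalType) (hX : hausdorff_space X) :
  accessible_space (hyperK X).
Proof.
move=> [k ck] [l cl] /eqP KL.
have kl : k <> l.
  by move=> e; subst l; apply: KL; congr exist; apply: Prop_irrelevance.
have [[x [kx nlx]]|nex] := pselect (exists x, k x /\ ~ l x).
  exists (vietoris_sub (true, ~` l)); split.
  - apply: H_sub_open; exact: closed_openC (compact_closed hX cl).
  - by rewrite in_setE /vietoris_sub /=; exists x.
  - by rewrite in_setE /vietoris_sub /= => -[y [ly nly]].
have [x [lx nkx]] : exists x, l x /\ ~ k x.
  apply: contrapT => nex2; apply: kl; rewrite eqEsubset; split => y.
    by move=> ky; apply: contrapT => nly; apply: nex; exists y.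
  by move=> ly; apply: contrapT => nky; apply: nex2; exists y.
exists (vietoris_sub (false, ~` [set x])); split.
- apply: H_sub_open; apply: closed_openC.
  exact: accessible_closed_set1 (hausdorff_accessible hX) x.
- by rewrite in_setE /vietoris_sub /= => y ky yx; apply: nkx; rewrite -yx.
- by rewrite in_setE /vietoris_sub /= => h; exact: (h x lx).
Qed.

Lemma H_fin_closed (X : topologicalType) (hX : hausdorff_space X)
  (A : set (hyperK X)) : finite_set A -> closed A.
Proof. exact: (accessible_finite_set_closed.1 (H_acc hX)). Qed.


Definition ptop (X : topologicalType) (x : X) : Type := X.
HB.instance Definition _ (X : topologicalType) (x : X) := Topological.on (@ptop X x).
HB.instance Definition _ (X : topologicalType) (x : X) := isPointed.Build (@ptop X x) x.
Lemma cc (X : topologicalType) (x : X) (A : set X) : compact A -> cover_compact A.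
Proof. move=> cA. have := @compact_cover (@ptop X x). move=> e.
have : cover_compact (A : set (@ptop X x)). rewrite -e. exact: cA. exact. Qed.

Lemma lc_nbhd (X : topologicalType) (lc : locally_compact [set: X]) (k : set X) :
  compact k -> exists V C, [/\ open V, k `<=` V, V `<=` C & compact C].
Proof.
move=> ck.
have [[x0 kx0]|k0] := pselect (k !=set0); last first.
  exists set0, set0; split => //; [exact: open0 | | exact: compact0].
  by move=> x kx; apply: k0; exists x.
pose D := [set V : set X | open V /\ compact (closure V)].
have cov : k `<=` cover D id.
  move=> x kx.
  have [U nU0 [cU clU]] := lc x I.
  have nU : nbhs x U by move: nU0; rewrite withinET.
  exists (interior U); last exact: nbhs_singleton (nbhs_interior nU).
  split; first exact: open_interior.
  apply: (subclosed_compact _ cU); first exact: closed_closure.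
  rewrite [X in _ `<=` X](closure_id U).1 //; apply: closure_subset.
  exact: interior_subset.
have [D' D'D kD'] := cc x0 ck (fun i Di => (proj1 Di)) cov.
pose F i := if pselect (D i) then closure i else set0.
exists (\bigcup_(i in [set` D']) i), (\big[setU/set0]_(i <- D') F i); split => //.
- by apply: bigcup_open => i /D'D; rewrite in_setE => -[].
- rewrite -bigcup_fset => y [i Di iy]; exists i => //.
  have := D'D _ Di; rewrite in_setE => Dii.
  rewrite /F; destruct (pselect (D i)) as [d|nD]; [exact: subset_closure | by []].
- apply: bigsetU_compact => i _.
  rewrite /F; destruct (pselect (D i)) as [Di|nD]; [exact: (proj2 Di) | exact: compact0].
Qed.


Lemma inf_seq (T : Type) (A : set T) : infinite_set A ->
  exists f : nat -> T, injective f /\ (forall n, A (f n)).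
Proof.
elim/Ppointed: T => T in A *.
  by move=> h; exfalso; apply: h; rewrite (empty_eq0 A); exact: finite_set0.
move=> /infiniteP /pcard_leP /injfunPex [f ff finj].
exists f; split; last by move=> n; exact: ff.
by move=> a b e; apply: finj; rewrite ?in_setE.
Qed.

Lemma seq_size_omega (T : Type) (f : nat -> T) : injective f ->
  has_size_omega (range f).
Proof.
move=> finj; rewrite /has_size_omega.
apply: inj_card_eq => a b _ _; exact: finj.
Qed.


Lemma ext_to_cal (X : topologicalType) (Kp : Type) :
  hausdorff_space X -> locally_compact [set: X] ->
  extent_le (hyperK X) Kp ->
  calibre (@hyperK_le X) (@has_size_succ Kp _) (@has_size_omega _).
Proof.
move=> hX lc ext S [nS _].
apply: contrapT => ncal.
apply: nS; apply: ext.
have loc : forall K : hyperK X, exists N, [/\ open N, N K & finite_set (N `&` S)].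
  move=> [k ck]; have [V [C [oV kV VC cC]]] := lc_nbhd lc ck.
  exists (vietoris_sub (false, V)); split; first exact: H_sub_open.
    by rewrite /vietoris_sub /=.
  apply: contrapT => inf; have [f [finj fA]] := inf_seq inf.
  apply: ncal; exists (range f); split.
  - by move=> _ [n _ <-]; have [] := fA n.
  - exact: seq_size_omega.
  - exists (exist _ C cC : hyperK X) => _ [n _ <-]; have [h _] := fA n.
    by rewrite /hyperK_le /=; apply: subset_trans VC; exact: h.
have key : forall K, exists2 Ob, open Ob /\ Ob K & Ob `&` S `<=` [set K].
  move=> K; have [N [oN NK fin]] := loc K.
  exists (N `&` ~` ((N `&` S) `\` [set K])).
    split; last by split => // -[_ ]; apply.
    apply: openI oN _; apply: closed_openC. apply: (H_fin_closed hX).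
    exact: finite_setD.
  move=> L [[NL nL] SL]; apply: contrapT => nLK; apply: nL; by split.
split.
- move=> K clK; have [Ob [oO OK] OS] := key K.
  have [L [SL OL]] := clK Ob (open_nbhs_nbhs (conj oO OK)).
  by rewrite -(OS L (conj OL SL)).
- move=> K SK; have [Ob [oO OK] OS] := key K; exists Ob; split => //.
  by apply/seteqP; split => [L|L ->]; [exact: OS | by split].
Qed.


Lemma cal_to_ext (X : topologicalType) (Kp : Type) :
  hausdorff_space X ->
  calibre (@hyperK_le X) (@has_size_succ Kp _) (@has_size_omega _) ->
  extent_le (hyperK X) Kp.
Proof.
move=> hX cal D [clD dD].
apply: contrapT => nD.
have [B [BD hB]] := succ_sub nD.
have [S' [S'B omS' [[l cl] ub]]] := cal B hB.
have infS' : infinite_set S'.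
  by apply/infiniteP; have /card_eqPle[_ ?] := omS'.
have [e [einj eS']] := inf_seq infS'.
have eD : forall n, D (e n) by move=> n; apply/BD/S'B.
have el : forall n, proj1_sig (e n) `<=` l by move=> n; exact: (ub _ (eS' n)).
have [G [uG subG]] := ultraFilterLemma (@eventually_filter).
have PG : ProperFilter G := @ultra_proper _ _ uG.
have G0 : ~ G set0 by apply: filter_not_empty.
have Gne : forall A, G A -> exists n, A n.
  move=> A GA; apply: contrapT => nA; apply: G0.
  by rewrite (_ : set0 = A) //; apply/seteqP; split => // n An; apply: nA; exists n.
have Gcof : forall m, G [set n | (m < n)%N].
  by move=> m; apply: subG; exists m.+1 => //.
have two : forall A, G A -> exists n m, n <> m /\ A n /\ A m.
  move=> A GA; have [n An] := Gne _ GA.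
  have [m [Am nm]] := Gne _ (filterI GA (Gcof n)).
  exists n, m; split => //; move=> enm; move: nm; rewrite /= enm ltnn.
  by [].
pose meet n (U : set X) := proj1_sig (e n) `&` U !=set0.
pose Z := [set x : X | forall U, nbhs x U -> G [set n | meet n U]].
have clZ : closed Z.
  move=> x clx U nU.
  have := nU; rewrite nbhsE => -[W [oW Wx] WU].
  have [z [Zz Wz]] := clx W (open_nbhs_nbhs (conj oW Wx)).
  apply: filterS (Zz W (open_nbhs_nbhs (conj oW Wz))).
  by move=> n [y [eny Wy]]; exists y; split => //; apply: WU.
have cK0 : compact (l `&` Z) by apply: compact_closedI.
pose K0 := (exist _ (l `&` Z) cK0 : hyperK X).
have sub_conv : forall i : vietoris_index X, open i.2 -> vietoris_sub i K0 ->
    G [set n | vietoris_sub i (e n)].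
  move=> [[|] U] /= oU; rewrite /vietoris_sub /=.
    move=> [x [[lx Zx] Ux]].
    exact: Zx U (open_nbhs_nbhs (conj oU Ux)).
  move=> K0U.
  have [//|GA] := in_ultra_setVsetC [set n | proj1_sig (e n) `<=` U] uG.
  exfalso.
  pose A := ~` [set n | proj1_sig (e n) `<=` U].
  pose C := l `&` ~` U.
  have cC : compact C by apply: compact_closedI => //; exact: open_closedC.
  have exA : forall n, A n -> exists x, (proj1_sig (e n) `&` ~` U) x.
    move=> n An; apply: contrapT => nex; apply: An => x enx.
    by apply: contrapT => nUx; apply: nex; exists x.
  have [n0 An0] := Gne _ GA.
  have [x0 _] := exA n0 An0.
  pose f n := xget x0 (proj1_sig (e n) `&` ~` U).
  have fP : forall n, A n -> (proj1_sig (e n) `&` ~` U) (f n).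
    by move=> n An; apply: xgetPex; exact: exA.
  have PF : ProperFilter (f @ G) by apply: fmap_proper_filter.
  have FC : (f @ G) C.
    apply: (@filterS _ G _ A); last exact: GA.
    move=> n An; have [enf nUf] := fP n An.
    by split => //; exact: el enf.
  have [y [[ly nUy] cly]] := cC _ PF FC.
  have nZy : ~ Z y by move=> Zy; apply: nUy; apply: K0U.
  have [V nV nGV] : exists2 V, nbhs y V & ~ G [set n | meet n V].
    apply: contrapT => nex; apply: nZy => V nV; apply: contrapT => nG.
    by apply: nex; exists V.
  have [//|GnV] := in_ultra_setVsetC [set n | meet n V] uG.
  pose P := [set x | exists n, (A n /\ ~ meet n V) /\ f n = x].
  have FP : (f @ G) P.
    apply: (@filterS _ G _ (A `&` ~` [set n | meet n V])); last exact: filterI.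
    by move=> n hn; exists n.
  have [_ [[n [[An nmeet] <-]] Vfn]] := cly P V FP nV.
  apply: nmeet; exists (f n); split => //; have [] := fP n An; done.
have conv : forall N : set (hyperK X), open N -> N K0 -> G [set n | N (e n)].
  move=> N oN NK0; have [F [Fo FK0 FN]] := H_open_base oN NK0.
  have : G (\bigcap_(i in [set` F]) [set n | vietoris_sub i (e n)]).
    apply: filter_bigI => i iF; apply: sub_conv; [exact: Fo | exact: FK0].
  by apply: filterS => n hn; apply: FN => i iF; exact: hn.
have [DK0|nDK0] := pselect (D K0).
  have [U [oU UK0 UD]] := dD K0 DK0.
  have [n [m [nm [Un Um]]]] := two _ (conv U oU UK0).
  have hn : [set K0] (e n) by rewrite -UD; split => //.
  have hm : [set K0] (e m) by rewrite -UD; split => //.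
  by apply: nm; apply: einj; rewrite hn hm.
have [n hn] := Gne _ (conv _ (closed_openC clD) nDK0).
exact: hn (eD n).
Qed.

Unset Implicit Arguments.

Theorem mainTheorem6 (X : topologicalType) (Kappa : Type) :
  hausdorff_space X -> locally_compact [set: X] ->
  infinite_set [set: Kappa] ->
  calibre (@hyperK_le X) (@has_size_succ Kappa _) (@has_size_omega _)
  <-> extent_le (hyperK X) Kappa.
Proof.
move=> hX lc _; split.
- exact: cal_to_ext.
- exact: ext_to_cal.
Qed.
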